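(* Let $(g,f)$ be a strong sample mechanism on $\mathcal{G}^1_n$ and let $S\subseteq N$. For any nomination profiles $\mathbf{x},\mathbf{x}'\in\mathcal{G}^1_n$ with $\mathbf{x}_{-S}=\mathbf{x}'_{-S}$ (i.e., every vertex outside $S$ casts the same vote in $\mathbf{x}$ and $\mathbf{x}'$), if $S\setminus g(\mathbf{x})\neq\emptyset$ then $S\setminus g(\mathbf{x}')\neq\emptyset$.
   Context: $N=\{1,\dots,n\}$. $\mathcal{G}^1_n$ is the set of directed graphs on $N$ without self-loops in which every vertex has out-degree exactly $1$; a profile $\mathbf{x}$ is written as a tuple with $x_u\in N\setminus\{u\}$ the vertex nominated by $u$, and $(x'_u,\mathbf{x}_{-u})$ denotes the profile where $u$'s vote is changed to $x'_u$. $\mathbf{x}_{-S}$ denotes the graph obtained by deleting all outgoing edges of vertices in $S$. For a profile $\mathbf{x}$ and $S\subseteq N$, $W_S(\mathbf{x})=\{w\in N\setminus S:\ (v,w)\text{ is an edge for some } v\in S\}$. A sample mechanism $(g,f)$ first selects a sample set $g(\mathbf{x})$ using a function $g:\mathcal{G}^1_n\to 2^N\setminus\{\emptyset\}$ and then applies a (possibly randomized) selection rule $f$ whose range is restricted to $W_{g(\mathbf{x})}(\mathbf{x})$ (no winner if this set is empty). It is a strong sample mechanism if $g(x'_u,\mathbf{x}_{-u})=g(\mathbf{x})$ for all $\mathbf{x}\in\mathcal{G}^1_n$, all $u\in g(\mathbf{x})$ and all $x'_u\in N\setminus\{u\}$. *)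

(* Defs.v *)
(* Vertices N = {1..n} are modelled by 'I_n. *)
From mathcomp Require Import all_boot.
Set Implicit Arguments. Unset Strict Implicit. Unset Printing Implicit Defensive.

(* A (candidate) nomination profile: x u is the vertex nominated by u. *)
Definition vote n := {ffun 'I_n -> 'I_n}.

(* x is in G^1_n: no self-loops (out-degree exactly 1 is built into the function). *)
Definition is_profile n (x : vote n) : bool := [forall u, x u != u].

Definition upd n (x : vote n) (u y : 'I_n) : vote n :=
  [ffun v => if v == u then y else x v].

(* g : G^1_n -> 2^N \ {emptyset}; only its values on genuine profiles matter. *)
Definition sample_fun n (g : vote n -> {set 'I_n}) : Prop :=
  forall x, is_profile x -> g x != set0.

Definition strong_sample n (g : vote n -> {set 'I_n}) : Prop :=
  forall x, is_profile x -> forall u, u \in g x ->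
  forall y, y != u -> g (upd x u y) = g x.

(* Main.v *)
Require Import Defs.
From mathcomp Require Import all_boot.

Lemma mix_lemma (n : nat) (g : vote n -> {set 'I_n}) (S : {set 'I_n})
  (x x' : vote n) : strong_sample g -> is_profile x -> is_profile x' ->
  S \subset g x' ->
  forall k (T : {set 'I_n}), #|T| = k -> T \subset S ->
  is_profile [ffun v => if v \in T then x v else x' v] /\
  g [ffun v => if v \in T then x v else x' v] = g x'.
Proof.
move=> Hs Hx Hx' HS; elim=> [|k IH] T HT TS.
  have -> : T = set0 by apply/eqP; rewrite -cards_eq0 HT.
  have -> : [ffun v => if v \in (set0 : {set 'I_n}) then x v else x' v] = x'.
    by apply/ffunP=> v; rewrite ffunE inE.
  by [].
have : (0 < #|T|) by rewrite HT.
case/card_gt0P=> u uT.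
have HT' : #|T :\ u| = k by rewrite (cardsD1 u T) uT in HT; case: HT.
have [P1 G1] := IH _ HT' (subset_trans (subD1set T u) TS).
have E : [ffun v => if v \in T then x v else x' v] =
   upd [ffun v => if v \in T :\ u then x v else x' v] u (x u).
  apply/ffunP=> v; rewrite /upd !ffunE in_setD1.
  by case: eqP => [->|_] //=; rewrite uT.
have uS : u \in S by apply: (subsetP TS).
have ug : u \in g [ffun v => if v \in T :\ u then x v else x' v].
  by rewrite G1; apply: (subsetP HS).
have xu : x u != u by move/forallP: Hx.
split; last by rewrite E (Hs _ P1 u ug (x u) xu).
apply/forallP=> v; rewrite ffunE.
by case: (v \in T); [move/forallP: Hx|move/forallP: Hx'].
Qed.

Theorem mainTheorem2 (n : nat) (g : vote n -> {set 'I_n}) (S : {set 'I_n}) :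
  sample_fun g -> strong_sample g ->
  forall x x' : vote n, is_profile x -> is_profile x' ->
  (forall v, v \notin S -> x v = x' v) ->
  S :\: g x != set0 -> S :\: g x' != set0.
Proof.
move=> _ Hs x x' Hx Hx' Hagree.
apply: contra; rewrite setD_eq0 => HS.
have [_ G] := @mix_lemma n g S x x' Hs Hx Hx' HS _ S (erefl _) (subxx S).
have Ex : [ffun v => if v \in S then x v else x' v] = x.
  apply/ffunP=> v; rewrite ffunE.
  by case: (boolP (v \in S)) => // /Hagree ->.
by rewrite setD_eq0 -Ex G.
Qed.
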